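(* Let $\sigma=(\beta_1,\dots,\beta_M)$ be an arbitrary strategy, $\{\mathcal{I}_N\}$ an arbitrary sequence of instances of the non-binary voting game, and $\Sigma_N$ the symmetric profile in $\mathcal{I}_N$ in which every agent plays $\sigma$. Let $f_{w\mathbf{A}}=\sum_{m=1}^MP_{mw}\beta_m-\mu$, $f_{w\mathbf{R}}=\sum_{m=1}^MP_{mw}(1-\beta_m)-(1-\mu)$ and $f=\min(\min_{w\in\mathcal{H}}f_{w\mathbf{A}},\min_{w\in\mathcal{L}}f_{w\mathbf{R}})$. (i) If $f>0$, there exists a constant $N_0>0$ such that $A(\Sigma_N)\ge1-2\exp(-\tfrac12f^2N)$ for all $N>N_0$. (ii) If $f\le0$, there exist constants $N_0>0$ and $\eta'>0$ such that $A(\Sigma_N)\le1-\eta'$ for all $N>N_0$.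
   Context: Non-binary voting game. $N$ agents each vote for $\mathbf{A}$ or $\mathbf{R}$. World state $W\in\{1,\dots,\mathcal{W}\}$ (unobserved), prior $P_w>0$. Conditional on $W$, each agent independently receives a signal $S_n\in\{1,\dots,M\}$ with $P_{mw}=\Pr[S_n=m\mid W=w]$, satisfying stochastic dominance. Threshold $\mu\in(0,1)$: $\mathbf{A}$ wins iff at least $\mu N$ agents vote $\mathbf{A}$, else $\mathbf{R}$. Agents have utilities with $v_n(w,\mathbf{A})$ strictly increasing and $v_n(w,\mathbf{R})$ strictly decreasing in $w$. Constants $\alpha^{\mathbf{A}}_w$, $\alpha^{\mathbf{R}}_w=1-\alpha^{\mathbf{A}}_w$ independent of $N$: exactly $\lfloor\alpha^{\mathbf{R}}_wN\rfloor$ agents prefer $\mathbf{R}$ in state $w$; $\alpha^{\mathbf{A}}_w\ne\mu$. Informed majority decision in $w$: $\mathbf{A}$ if $\alpha^{\mathbf{A}}_w>\mu$, else $\mathbf{R}$. $\mathcal{L}=\{w:\alpha^{\mathbf{A}}_w<\mu\}$, $\mathcal{H}=\{w:\alpha^{\mathbf{A}}_w>\mu\}$, both nonempty. A sequence of instances: $\mathcal{I}_N$ has $N$ agents, all share $\mu$, $(P_w)$, $(P_{mw})$, $(\alpha^{\mathbf{A}}_w)$. Strategy $(\beta_1,\dots,\beta_M)$: $\beta_m$ = probability of voting $\mathbf{A}$ on signal $m$. $\lambda^{\mathbf{X}}_w(\Sigma)$: ex-ante probability that $\mathbf{X}$ wins in state $w$. Fidelity $A(\Sigma)=\sum_{w\in\mathcal{L}}P_w\lambda^{\mathbf{R}}_w(\Sigma)+\sum_{w\in\mathcal{H}}P_w\lambda^{\mathbf{A}}_w(\Sigma)$.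 *)

(* Defs.v *)
From HB Require Import structures.
From mathcomp Require Import all_boot all_order all_algebra.
From mathcomp Require Import all_classical all_reals all_analysis.
Set Implicit Arguments. Unset Strict Implicit. Unset Printing Implicit Defensive.
Import Order.TTheory GRing.Theory Num.Theory.
Local Open Scope ring_scope.

Section Voting.
Variables (R : realType) (W M : nat).
(* Psig m w = Pr[S_n = m | W = w]; beta m = Pr[vote A | signal m]; mu = threshold *)
Variables (Psig : 'I_M -> 'I_W -> R) (beta : 'I_M -> R) (mu : R).

(* number of A votes in a vote profile (true = A) *)
Definition nA N (v : {ffun 'I_N -> bool}) : nat := #|[set n | v n]|.

(* ex-ante probability (over signal profiles s and vote profiles v, agents
   independent given the state) of the vote profile, conditional on state w *)
Definition profile_prob N (w : 'I_W) (s : {ffun 'I_N -> 'I_M})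
    (v : {ffun 'I_N -> bool}) : R :=
  \prod_(n < N) (Psig (s n) w * (if v n then beta (s n) else 1 - beta (s n))).

Definition lamA N (w : 'I_W) : R :=
  \sum_(s : {ffun 'I_N -> 'I_M}) \sum_(v : {ffun 'I_N -> bool})
     (if mu * N%:R <= (nA v)%:R then profile_prob w s v else 0).

Definition lamR N (w : 'I_W) : R :=
  \sum_(s : {ffun 'I_N -> 'I_M}) \sum_(v : {ffun 'I_N -> bool})
     (if (nA v)%:R < mu * N%:R then profile_prob w s v else 0).

(* fidelity A(Sigma_N); L = {w | alphaA w < mu}, H = {w | alphaA w > mu} *)
Definition fidelity (P : 'I_W -> R) (alphaA : 'I_W -> R) N : R :=
  \sum_(w < W | alphaA w < mu) P w * lamR N w
  + \sum_(w < W | mu < alphaA w) P w * lamA N w.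

Definition fA (w : 'I_W) : R := \sum_(m < M) Psig m w * beta m - mu.
Definition fR (w : 'I_W) : R := \sum_(m < M) Psig m w * (1 - beta m) - (1 - mu).
End Voting.

(* Main.v *)
Require Import Defs.
From HB Require Import structures.
From mathcomp Require Import all_boot all_order all_algebra.
From mathcomp Require Import all_classical all_reals all_analysis.
From mathcomp Require Import ring lra.
Import Order.TTheory GRing.Theory Num.Theory.
Local Open Scope ring_scope.

Lemma expR_ge_quad {R : realType} (x : R) : 0 <= x -> 1 + x + x ^+ 2 / 2 <= expR x.
Proof.
move=> x0.
have -> : 1 + x + x ^+ 2 / 2 = series (exp_coeff x) 3.
  rewrite /series /exp_coeff /= !big_nat_recr //= big_nil /=.
  rewrite !factS fact0 /=. rewrite !expr0 !expr1. by field.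
have hm : {homo series (exp_coeff x) : n m / (n <= m)%N >-> n <= m}.
  apply: (@nondecreasing_series R (exp_coeff x) xpredT 0) => n _ _.
  by rewrite /exp_coeff /= divr_ge0 // exprn_ge0.
exact: (@nondecreasing_cvgn_le R (series (exp_coeff x)) hm (is_cvg_series_exp_coeff x) 3).
Qed.

Lemma expRN_le (R : realType) (s : R) : 0 <= s -> expR (- s) <= 1 - s + s ^+ 2 / 2.
Proof.
move=> s0; rewrite expRN.
have h := @expR_ge_quad R s s0.
have hp : 0 < 1 + s + s ^+ 2 / 2 by nra.
have e0 := expR_gt0 s.
rewrite -(@ler_pM2r _ (expR s)) // mulVf ?gt_eqF //.
have : 1 <= (1 - s + s ^+ 2 / 2) * (1 + s + s ^+ 2 / 2) by nra.
have : 0 <= (1 - s + s ^+ 2 / 2) by nra.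
nra.
Qed.

Lemma key_ineq {R : realType} (p m f : R) : 0 < f -> 0 <= m -> p <= 1 -> m + f <= p ->
  (1 - p + p * expR (- f)) * expR (f * m) <= expR (- (f ^+ 2 / 2)).
Proof.
move=> f0 m0 p1 hp.
have -> : - (f ^+ 2 / 2) = (- (f * m) - f ^+ 2 / 2) + f * m by ring.
rewrite expRD ler_pM2r ?expR_gt0 //.
apply: le_trans (expR_ge1Dx _).
have hE := @expRN_le R f (ltW f0).
have hE1 : expR (- f) <= 1 by rewrite expR_le1 oppr_le0 ltW.
have h1 : f - f ^+ 2 / 2 <= 1 - expR (- f) by lra.
have h2 : 0 <= 1 - expR (- f) by lra.
have h3 : (m + f) * (1 - expR (- f)) <= p * (1 - expR (- f)) by apply: ler_wpM2r.
have h4 : (m + f) * (f - f ^+ 2 / 2) <= (m + f) * (1 - expR (- f)) by apply: ler_wpM2l => //; lra.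
have h5 : f * m + f ^+ 2 / 2 <= (m + f) * (f - f ^+ 2 / 2) by nra.
nra.
Qed.
Section EE.
Variable R : realType.
Definition rr (p : R) (b : bool) : R := if b then p else 1 - p.
Definition cnt {N} (v : {ffun 'I_N -> bool}) : nat := (\sum_(n < N) (v n : nat))%N.
Definition EE (p : R) N (phi : nat -> R) : R :=
  \sum_(v : {ffun 'I_N -> bool}) (\prod_(n < N) rr p (v n)) * phi (cnt v).

Lemma EE0 p phi : EE p 0 phi = phi 0%N.
Proof.
rewrite /EE (big_pred1 [ffun=> false]); last first.
  by move=> v /=; symmetry; apply/eqP/ffunP => -[].
by rewrite big_ord0 mul1r /cnt big_ord0.
Qed.

Definition consf {N} (bv : bool * {ffun 'I_N -> bool}) : {ffun 'I_N.+1 -> bool} :=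
  [ffun i => if unlift ord0 i is Some j then bv.2 j else bv.1].

Lemma EES p N phi : EE p N.+1 phi = (1 - p) * EE p N phi + p * EE p N (fun k => phi k.+1).
Proof.
rewrite /EE (reindex (@consf N)); last first.
  exists (fun v : {ffun 'I_N.+1 -> bool} => (v ord0, [ffun j => v (lift ord0 j)])).
    move=> [b v] _ /=; rewrite /consf ffunE unlift_none; congr pair.
    by apply/ffunP => j; rewrite !ffunE liftK.
  move=> v _; apply/ffunP => i; rewrite /consf !ffunE /=.
  case: (unliftP ord0 i) => [j ->|->]; by rewrite ?ffunE.
have -> : forall G : bool * {ffun 'I_N -> bool} -> R, \sum_(j | true) G j = \sum_(b : bool) \sum_(v : {ffun 'I_N -> bool}) G (b, v).
  by move=> G; rewrite pair_big; apply: eq_bigr => -[].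
rewrite big_bool /= addrC !mulr_sumr; congr (_ + _); apply: eq_bigr => v _.
- rewrite big_ord_recl /cnt big_ord_recl /consf !ffunE unlift_none /=.
  rewrite add0n mulrA. congr (_ * _ * phi _).
    by apply: eq_bigr => j _; rewrite ffunE liftK.
  by apply: eq_bigr => j _; rewrite ffunE liftK.
- rewrite big_ord_recl /cnt big_ord_recl /consf !ffunE unlift_none /=.
  rewrite add1n mulrA; congr (_ * _ * phi _).
    by apply: eq_bigr => j _; rewrite ffunE liftK.
  by congr S; apply: eq_bigr => j _; rewrite ffunE liftK.
Qed.


Lemma EE_ext p N f g : (forall k, f k = g k) -> EE p N f = EE p N g.
Proof. by move=> h; apply: eq_bigr => v _; rewrite h. Qed.

Lemma EE_add p N f g : EE p N (fun k => f k + g k) = EE p N f + EE p N g.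
Proof. by rewrite /EE -big_split; apply: eq_bigr => v _; rewrite mulrDr. Qed.

Lemma EE_scale p N c f : EE p N (fun k => c * f k) = c * EE p N f.
Proof. by rewrite /EE mulr_sumr; apply: eq_bigr => v _; rewrite mulrCA. Qed.

Lemma EE_const p N c : EE p N (fun _ => c) = c.
Proof. elim: N => [|N IH]; first by rewrite EE0. rewrite EES IH; ring. Qed.

Lemma EE_le p N f g : 0 <= p <= 1 -> (forall k, f k <= g k) -> EE p N f <= EE p N g.
Proof.
move=> /andP[p0 p1] h; apply: ler_sum => v _; apply: ler_wpM2l => //.
apply: prodr_ge0 => n _; rewrite /rr; case: (v n) => //; lra.
Qed.

Lemma EE_exp p N t : EE p N (fun k => expR (t * k%:R)) = (1 - p + p * expR t) ^+ N.
Proof.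
elim: N => [|N IH]; first by rewrite EE0 mulr0 expR0 expr0.
rewrite EES IH exprS (@EE_ext p N _ (fun k => expR t * expR (t * k%:R))); last first.
  by move=> k; rewrite -expRD -natr1; congr expR; ring.
rewrite EE_scale IH; ring.
Qed.

Lemma EE_lin1 p N (c : R) (f : nat -> R) : EE p N (fun k => f k + c) = EE p N f + c.
Proof. by rewrite (EE_add p N f (fun _ => c)) EE_const. Qed.

Lemma EE_lin2 p N (a b c : R) (f g : nat -> R) :
  EE p N (fun k => f k + (a * g k + b)) = EE p N f + a * EE p N g + b.
Proof.
rewrite (EE_add p N f (fun k => a * g k + b)) (EE_add p N (fun k => a * g k) (fun _ => b)).
by rewrite EE_scale EE_const addrA.
Qed.

Lemma EE_lin4 p N (a b c d : R) (f1 f2 f3 f4 : nat -> R) :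
  EE p N (fun k => f1 k + (a * f2 k + (b * f3 k + (c * f4 k + d)))) =
  EE p N f1 + a * EE p N f2 + b * EE p N f3 + c * EE p N f4 + d.
Proof.
rewrite (EE_add p N f1) (EE_add p N (fun k => a * f2 k)) (EE_add p N (fun k => b * f3 k)).
rewrite (EE_add p N (fun k => c * f4 k) (fun _ => d)) !EE_scale EE_const; ring.
Qed.

Definition Yf (p : R) N (k : nat) : R := N%:R * p - k%:R.

Lemma EE_YS p N (F : R -> R) : EE p N.+1 (fun k => F (Yf p N.+1 k)) =
  (1 - p) * EE p N (fun k => F (Yf p N k + p)) + p * EE p N (fun k => F (Yf p N k + p - 1)).
Proof.
rewrite EES; congr (_ * _ + _ * _); apply: EE_ext => k; congr F; rewrite /Yf -!natr1; ring.
Qed.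

Lemma EE_Y p N : EE p N (Yf p N) = 0.
Proof.
elim: N => [|N IH]; first by rewrite EE0 /Yf !mul0r subr0.
have := EE_YS p N id; rewrite /= => ->.
rewrite (@EE_ext p N (fun k => Yf p N k + p - 1) (fun k => Yf p N k + (p - 1))); last by move=> k; ring.
rewrite (EE_lin1 p N p (Yf p N)) (EE_lin1 p N (p - 1) (Yf p N)) IH; ring.
Qed.

Lemma EE_Y2 p N : EE p N (fun k => Yf p N k ^+ 2) = N%:R * (p * (1 - p)).
Proof.
elim: N => [|N IH]; first by rewrite EE0 /Yf !mul0r subr0 expr0n.
rewrite (EE_YS p N (fun y => y ^+ 2)).
rewrite (@EE_ext p N _ (fun k => Yf p N k ^+ 2 + ((2 * p) * Yf p N k + p ^+ 2))); last by move=> k; ring.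
rewrite (@EE_ext p N (fun k => (Yf p N k + p - 1) ^+ 2) (fun k => Yf p N k ^+ 2 + ((2 * (p - 1)) * Yf p N k + (p - 1) ^+ 2))); last by move=> k; ring.
rewrite (EE_lin2 p N _ _ 0 (fun k => Yf p N k ^+ 2) (Yf p N)).
rewrite (EE_lin2 p N _ _ 0 (fun k => Yf p N k ^+ 2) (Yf p N)).
rewrite IH EE_Y -natr1; ring.
Qed.

Lemma EE_Y4 p N : 0 <= p <= 1 ->
  EE p N (fun k => Yf p N k ^+ 4) <= N%:R * (p * (1 - p)) + 3 * (N%:R * (p * (1 - p))) ^+ 2.
Proof.
move=> /andP[p0 p1].
elim: N => [|N IH]; first by rewrite EE0 /Yf !mul0r subr0 expr0n /= ?mul0r; lra.
rewrite (EE_YS p N (fun y => y ^+ 4)).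
rewrite (@EE_ext p N _ (fun k => Yf p N k ^+ 4 + ((4 * p) * Yf p N k ^+ 3 + ((6 * p ^+ 2) * Yf p N k ^+ 2 + ((4 * p ^+ 3) * Yf p N k + p ^+ 4))))); last by move=> k; ring.
rewrite (@EE_ext p N (fun k => (Yf p N k + p - 1) ^+ 4) (fun k => Yf p N k ^+ 4 + ((4 * (p - 1)) * Yf p N k ^+ 3 + ((6 * (p - 1) ^+ 2) * Yf p N k ^+ 2 + ((4 * (p - 1) ^+ 3) * Yf p N k + (p - 1) ^+ 4))))); last by move=> k; ring.
rewrite !(EE_lin4 p N _ _ _ _ (fun k => Yf p N k ^+ 4) (fun k => Yf p N k ^+ 3) (fun k => Yf p N k ^+ 2) (Yf p N)).
rewrite EE_Y2 EE_Y -natr1.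
set E4 := EE p N _ in IH *.
set E3 := EE p N _.
have hN : 0 <= N%:R :> R by apply: ler0n.
set s := p * (1 - p).
have s0 : 0 <= s by rewrite /s; nra.
have hq : (1 - p) * p ^+ 4 + p * (p - 1) ^+ 4 <= s.
  rewrite /s. have : p ^+ 3 + (1 - p) ^+ 3 <= 1 by nra. nra.
rewrite -/s in IH.
apply: (@le_trans _ _ (E4 + 6 * s * (N%:R * s) + s)).
  move: hq; rewrite /s => hq; lra.
have : 0 <= s * s by nra.
rewrite -natr1; nra.
Qed.

Lemma EE_lin3 p N (a b c : R) (f g h : nat -> R) :
  EE p N (fun k => a * f k + (b * g k + c * h k)) = a * EE p N f + b * EE p N g + c * EE p N h.
Proof.
rewrite (EE_add p N (fun k => a * f k)) (EE_add p N (fun k => b * g k) (fun k => c * h k)).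
by rewrite !EE_scale addrA.
Qed.

Lemma pw (s V y : R) : 0 < s -> s ^+ 2 = V ->
  16 * s * V * y + 12 * V * y ^+ 2 - y ^+ 4 <= 100 * V ^+ 2 * (if 0 < y then 1 else 0).
Proof.
move=> s0 <-; case: ifP => hy.
  have : 0 <= (y ^+ 2 - 8 * s ^+ 2) ^+ 2 + 4 * s ^+ 2 * (y - 2 * s) ^+ 2 + 20 * s ^+ 4.
    have : 0 <= s ^+ 4 by rewrite exprn_ge0 // ltW.
    have : 0 <= (y ^+ 2 - 8 * s ^+ 2) ^+ 2 by rewrite sqr_ge0.
    have : 0 <= s ^+ 2 * (y - 2 * s) ^+ 2 by rewrite mulr_ge0 // sqr_ge0.
    lra.
  have -> : (y ^+ 2 - 8 * s ^+ 2) ^+ 2 + 4 * s ^+ 2 * (y - 2 * s) ^+ 2 + 20 * s ^+ 4 =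
     100 * (s ^+ 2) ^+ 2 * 1 - (16 * s * s ^+ 2 * y + 12 * s ^+ 2 * y ^+ 2 - y ^+ 4) by ring.
  by rewrite subr_ge0.
move/negbT: hy; rewrite -leNgt => hy.
have -> : 16 * s * s ^+ 2 * y + 12 * s ^+ 2 * y ^+ 2 - y ^+ 4 = y * ((y + 2 * s) ^+ 2 * (4 * s - y)) by ring.
rewrite mulr0; apply: mulr_le0_ge0 => //; apply: mulr_ge0; first exact: sqr_ge0.
lra.
Qed.

Lemma EE_anti p N (sg : R) : 0 <= p <= 1 -> sg ^+ 2 = 1 -> 1 <= N%:R * (p * (1 - p)) ->
  2 / 25 <= EE p N (fun k => if 0 < sg * Yf p N k then 1 else 0).
Proof.
move=> hp hsg hV.
set V := N%:R * (p * (1 - p)) in hV *.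
have V0 : 0 < V by lra.
set s := Num.sqrt V.
have s0 : 0 < s by rewrite sqrtr_gt0.
have hs : s ^+ 2 = V by rewrite sqr_sqrtr // ltW.
set D := 100 * V ^+ 2.
have D0 : 0 < D by rewrite /D; apply: mulr_gt0 => //; apply: exprn_gt0.
have hle : forall k, (sg * 16 * s * V / D) * Yf p N k + ((12 * V / D) * Yf p N k ^+ 2 + (- 1 / D) * Yf p N k ^+ 4)
    <= (if 0 < sg * Yf p N k then 1 else 0).
  move=> k.
  have := @pw s V (sg * Yf p N k) s0 hs.
  have -> : (sg * Yf p N k) ^+ 2 = Yf p N k ^+ 2 by rewrite exprMn hsg mul1r.
  have -> : (sg * Yf p N k) ^+ 4 = Yf p N k ^+ 4.
    by rewrite exprMn (_ : 4%N = (2 * 2)%N) // exprM hsg expr1n mul1r.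
  rewrite -/D => h.
  have -> : (sg * 16 * s * V / D) * Yf p N k + ((12 * V / D) * Yf p N k ^+ 2 + (- 1 / D) * Yf p N k ^+ 4)
     = (16 * s * V * (sg * Yf p N k) + 12 * V * Yf p N k ^+ 2 - Yf p N k ^+ 4) / D.
    by field; rewrite gt_eqF.
  rewrite ler_pdivrMr //; apply: (le_trans h); by rewrite mulrC.
apply: le_trans (@EE_le p N _ _ hp hle).
rewrite EE_lin3 EE_Y EE_Y2 -/V.
have h4 := @EE_Y4 p N hp; rewrite -/V in h4.
set E4 := EE p N _ in h4 *.
have -> : sg * 16 * s * V / D * 0 + 12 * V / D * V + -1 / D * E4 = (12 * V ^+ 2 - E4) / D.
  by field; rewrite gt_eqF.
rewrite ler_pdivlMr // /D.
have : V <= V ^+ 2 by rewrite expr2; nra.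
lra.
Qed.

Lemma cnt_le N (v : {ffun 'I_N -> bool}) : (cnt v <= N)%N.
Proof.
rewrite /cnt -[X in (_ <= X)%N]card_ord -sum1_card.
by apply: leq_sum => n _; case: (v n).
Qed.

Lemma EE_le' p N f g : 0 <= p <= 1 -> (forall k, (k <= N)%N -> f k <= g k) -> EE p N f <= EE p N g.
Proof.
move=> /andP[p0 p1] h; apply: ler_sum => v _; apply: ler_wpM2l; last exact/h/cnt_le.
apply: prodr_ge0 => n _; rewrite /rr; case: (v n) => //; lra.
Qed.

Lemma EE_k p N a b : EE p N (fun k => a * k%:R + b) = a * (N%:R * p) + b.
Proof.
rewrite (@EE_ext p N _ (fun k => (- a) * Yf p N k + (a * (N%:R * p) + b))); last first.
  by move=> k; rewrite /Yf; ring.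
by rewrite (EE_add p N (fun k => - a * Yf p N k)) EE_scale EE_Y EE_const; ring.
Qed.

End EE.
Arguments rr {R}.
Arguments EE {R}.
Arguments Yf {R}.
Arguments EE_le {R}.
Arguments EE_le' {R}.
Arguments EE_const {R}.
Arguments EE_k {R}.
Arguments EE_anti {R}.
Arguments EE_add {R}.
Arguments EE_ext {R}.
Arguments EE_exp {R}.
Arguments EE_scale {R}.

Lemma nA_cnt N (v : {ffun 'I_N -> bool}) : nA v = cnt v.
Proof.
rewrite /nA /cnt -sum1_card big_mkcond /=; apply: eq_bigr => n _.
by rewrite inE; case: (v n).
Qed.

Lemma lam_EE (R : realType) (W M : nat) (Psig : 'I_M -> 'I_W -> R) (beta : 'I_M -> R)
  (hPsig_sum : forall w, \sum_(m < M) Psig m w = 1) N w (c : nat -> bool) :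
  \sum_(s : {ffun 'I_N -> 'I_M}) \sum_(v : {ffun 'I_N -> bool})
     (if c (nA v) then profile_prob Psig beta w s v else 0)
  = EE (\sum_(m < M) Psig m w * beta m) N (fun k => if c k then 1 else 0).
Proof.
rewrite exchange_big /EE; apply: eq_bigr => v _.
rewrite (eq_bigr (fun s => profile_prob Psig beta w s v * (if c (nA v) then 1 else 0))); last first.
  by move=> s _; case: ifP; rewrite ?mulr1 ?mulr0.
rewrite -mulr_suml nA_cnt; congr (_ * _).
rewrite /profile_prob -(bigA_distr_bigA (fun n m => Psig m w * (if v n then beta m else 1 - beta m))).
apply: eq_bigr => n _; rewrite /rr; case: (v n) => //.
rewrite (eq_bigr (fun m => Psig m w - Psig m w * beta m)); last by move=> m _; ring.
by rewrite sumrB hPsig_sum.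
Qed.

Lemma one_le_expR {R : realType} (x : R) : 0 <= x -> 1 <= expR x.
Proof. move=> x0; have := expR_ge1Dx x; lra. Qed.

Theorem corollary6 (R : realType) (W M : nat)
  (P : 'I_W -> R) (Psig : 'I_M -> 'I_W -> R) (mu : R) (alphaA : 'I_W -> R)
  (vA vR : forall N : nat, 'I_N -> 'I_W -> R)
  (beta : 'I_M -> R) (f : R)
  (* prior *)
  (hP_pos : forall w, 0 < P w) (hP_sum : \sum_(w < W) P w = 1)
  (* signal distributions *)
  (hPsig_nn : forall m w, 0 <= Psig m w)
  (hPsig_sum : forall w, \sum_(m < M) Psig m w = 1)
  (* first-order stochastic dominance: higher states give higher signals *)
  (hdom : forall (w w' : 'I_W) (k : nat), (w <= w')%N ->
     \sum_(m < M | (k <= m)%N) Psig m w <= \sum_(m < M | (k <= m)%N) Psig m w')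
  (* threshold *)
  (hmu : 0 < mu < 1)
  (* utilities of the instances I_N *)
  (hvA : forall N (n : 'I_N) (w w' : 'I_W), (w < w')%N -> vA N n w < vA N n w')
  (hvR : forall N (n : 'I_N) (w w' : 'I_W), (w < w')%N -> vR N n w' < vR N n w)
  (halpha : forall N (w : 'I_W),
     (#|[set n : 'I_N | vA N n w < vR N n w]|)%:Z = Num.floor ((1 - alphaA w) * N%:R))
  (halpha_mu : forall w, alphaA w != mu)
  (hL : exists w, alphaA w < mu) (hH : exists w, mu < alphaA w)
  (* strategy *)
  (hbeta : forall m, 0 <= beta m <= 1)
  (* f = min (min_{w in H} f_{wA}, min_{w in L} f_{wR}) *)
  (hf_att : (exists2 w, mu < alphaA w & f = fA Psig beta mu w) \/
            (exists2 w, alphaA w < mu & f = fR Psig beta mu w))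
  (hf_le : (forall w, mu < alphaA w -> f <= fA Psig beta mu w) /\
           (forall w, alphaA w < mu -> f <= fR Psig beta mu w)) :
  (0 < f -> exists N0 : nat, (0 < N0)%N /\ forall N : nat, (N0 < N)%N ->
     1 - 2 * expR (- (1 / 2) * f ^+ 2 * N%:R) <= fidelity Psig beta mu P alphaA N) /\
  (f <= 0 -> exists N0 : nat, exists eta : R, (0 < N0)%N /\ 0 < eta /\
     forall N : nat, (N0 < N)%N -> fidelity Psig beta mu P alphaA N <= 1 - eta).
Proof.
case/andP: hmu => mu0 mu1.
pose pw := fun w => \sum_(m < M) Psig m w * beta m.
have hpw : forall w, 0 <= pw w <= 1.
  move=> w; apply/andP; split.
    apply: sumr_ge0 => m _; apply: mulr_ge0 => //; by case/andP: (hbeta m).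
  rewrite -(hPsig_sum w); apply: ler_sum => m _; case/andP: (hbeta m) => b0 b1.
  by rewrite -[X in _ <= X]mulr1; apply: ler_wpM2l.
have hfA : forall w, fA Psig beta mu w = pw w - mu by [].
have hfR : forall w, fR Psig beta mu w = mu - pw w.
  move=> w; rewrite /fR (eq_bigr (fun m => Psig m w - Psig m w * beta m)); last by move=> m _; ring.
  by rewrite sumrB hPsig_sum /pw; ring.
have hlA : forall N w, lamA Psig beta mu N w = EE (pw w) N (fun k => if mu * N%:R <= k%:R then 1 else 0).
  by move=> N w; exact: (@lam_EE R W M Psig beta hPsig_sum N w (fun k => mu * N%:R <= k%:R)).
have hlR : forall N w, lamR Psig beta mu N w = EE (pw w) N (fun k => if k%:R < mu * N%:R then 1 else 0).
  by move=> N w; exact: (@lam_EE R W M Psig beta hPsig_sum N w (fun k => k%:R < mu * N%:R)).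
have hsum1 : forall N w, lamA Psig beta mu N w + lamR Psig beta mu N w = 1.
  move=> N w; rewrite hlA hlR -EE_add (@EE_ext R (pw w) N _ (fun _ => 1)) ?EE_const //.
  by move=> k; rewrite ltNge; case: ifP => _; rewrite ?addr0 ?add0r.
have hnnA : forall N w, 0 <= lamA Psig beta mu N w.
  move=> N w; rewrite hlA; apply: (le_trans (_ : 0 <= EE (pw w) N (fun _ => 0))); first by rewrite EE_const.
  apply: EE_le (hpw w) _ => k; case: ifP => _ //.
have hnnR : forall N w, 0 <= lamR Psig beta mu N w.
  move=> N w; rewrite hlR; apply: (le_trans (_ : 0 <= EE (pw w) N (fun _ => 0))); first by rewrite EE_const.
  apply: EE_le (hpw w) _ => k; case: ifP => _ //.
have hPsplit : \sum_(w < W | alphaA w < mu) P w + \sum_(w < W | mu < alphaA w) P w = 1.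
  rewrite -hP_sum [RHS](bigID (fun w => alphaA w < mu)) /=; congr (_ + _); apply: eq_bigl => w.
  by rewrite -leNgt le_eqVlt eq_sym (negbTE (halpha_mu w)).
split.
- move=> f0; exists 1%N; split => // N _.
  set e := expR (- (f ^+ 2 / 2) * N%:R).
  have e0 : 0 <= e by apply: expR_ge0.
  have hH' : forall w, mu < alphaA w -> lamR Psig beta mu N w <= e.
    move=> w hw; have hf := hf_le.1 w hw; rewrite hfA in hf.
    rewrite hlR.
    apply: le_trans (EE_le (pw w) N _ (fun k => expR (f * mu * N%:R) * expR ((- f) * k%:R)) (hpw w) _) _.
      move=> k; case: ifP => hk; last by rewrite mulr_ge0 ?expR_ge0.
      rewrite -expRD; apply: one_le_expR.
      have : 0 <= f * (mu * N%:R - k%:R) by apply: mulr_ge0; [lra | rewrite subr_ge0 ltW].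
      lra.
    rewrite EE_scale EE_exp expRM_natr /e expRM_natr -exprMn.
    apply: lerXn2r; rewrite ?nnegrE.
    + apply: mulr_ge0; first exact: expR_ge0.
      have := hpw w; have := expR_ge0 (- f); nra.
    + exact: expR_ge0.
    rewrite mulrC; apply: key_ineq => //; first exact: ltW.
      by case/andP: (hpw w).
    lra.
  have hL' : forall w, alphaA w < mu -> lamA Psig beta mu N w <= e.
    move=> w hw; have hf := hf_le.2 w hw; rewrite hfR in hf.
    rewrite hlA.
    apply: le_trans (EE_le (pw w) N _ (fun k => expR (- (f * mu) * N%:R) * expR (f * k%:R)) (hpw w) _) _.
      move=> k; case: ifP => hk; last by rewrite mulr_ge0 ?expR_ge0.
      rewrite -expRD; apply: one_le_expR.
      have : 0 <= f * (k%:R - mu * N%:R) by apply: mulr_ge0; [lra | rewrite subr_ge0].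
      lra.
    rewrite EE_scale EE_exp expRM_natr /e expRM_natr -exprMn.
    apply: lerXn2r; rewrite ?nnegrE.
    + apply: mulr_ge0; first exact: expR_ge0.
      have := hpw w; have := expR_ge0 f; nra.
    + exact: expR_ge0.
    have := @key_ineq R (1 - pw w) (1 - mu) f f0 _ _ _.
    have -> : expR (f * (1 - mu)) = expR f * expR (- (f * mu)) by rewrite -expRD; congr expR; ring.
    have e1 : expR (- f) * expR f = 1 by rewrite -expRD addNr expR0.
    have -> : (1 - (1 - pw w) + (1 - pw w) * expR (- f)) * (expR f * expR (- (f * mu)))
       = expR (- (f * mu)) * (1 - pw w + pw w * expR f) + (1 - pw w) * (expR (- f) * expR f - 1) * expR (- (f * mu)) by ring.
    rewrite e1 subrr mulr0 mul0r addr0; apply; first lra.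
      by case/andP: (hpw w) => a _; lra.
    lra.
  rewrite /fidelity.
  have h1 : \sum_(w < W | alphaA w < mu) P w * (1 - e) <= \sum_(w < W | alphaA w < mu) P w * lamR Psig beta mu N w.
    apply: ler_sum => w hw; apply: ler_wpM2l; first exact: ltW.
    have := hsum1 N w; have := hL' w hw; lra.
  have h2 : \sum_(w < W | mu < alphaA w) P w * (1 - e) <= \sum_(w < W | mu < alphaA w) P w * lamA Psig beta mu N w.
    apply: ler_sum => w hw; apply: ler_wpM2l; first exact: ltW.
    have := hsum1 N w; have := hH' w hw; lra.
  rewrite -!mulr_suml in h1 h2.
  have -> : - (1 / 2) * f ^+ 2 * N%:R = - (f ^+ 2 / 2) * N%:R by ring.
  rewrite -/e.
  have : (\sum_(w < W | alphaA w < mu) P w) * (1 - e) + (\sum_(w < W | mu < alphaA w) P w) * (1 - e) = 1 - e.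
    by rewrite -mulrDl hPsplit mul1r.
  lra.
- move=> fle0.
  have hNV : forall w (N : nat), 0 < pw w < 1 ->
      ((Num.truncn (1 / (pw w * (1 - pw w)))).+1 < N)%N ->
      1 <= N%:R * (pw w * (1 - pw w)).
    move=> w N /andP[p0 p1] hN.
    have s0 : 0 < pw w * (1 - pw w) by apply: mulr_gt0; lra.
    have h1 := truncnS_gt (1 / (pw w * (1 - pw w))).
    have h2 : ((Num.truncn (1 / (pw w * (1 - pw w)))).+1%:R : R) <= N%:R.
      by rewrite ler_nat ltnW.
    have : 1 / (pw w * (1 - pw w)) * (pw w * (1 - pw w)) = 1 by rewrite div1r mulVf // gt_eqF.
    nra.
  case: hf_att => [[w hw hfw] | [w hw hfw]].
  +
    have hp : pw w <= mu by rewrite hfA in hfw; lra.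
    exists (Num.truncn (1 / (pw w * (1 - pw w)))).+1, (P w * (2 / 25)).
    split => //; split; first by apply: mulr_gt0 => //.
    move=> N hN.
    have N1 : (1 <= N)%N by apply: leq_ltn_trans hN.
    have N1' : (1 : R) <= N%:R by rewrite ler1n.
    have hlam : 2 / 25 <= lamR Psig beta mu N w.
      rewrite hlR.
      have [p0|p0] : pw w = 0 \/ 0 < pw w.
        by case/andP: (hpw w); rewrite le_eqVlt => /orP[/eqP <-|]; [left|right].
      * apply: (@le_trans _ _ (EE (pw w) N (fun k => (- 1 / (mu * N%:R)) * k%:R + 1))).
          by rewrite EE_k p0 !mulr0 add0r; lra.
        apply: EE_le (hpw w) _ => k.
        have muN : 0 < mu * N%:R by apply: mulr_gt0 => //; lra.
        have -> : - 1 / (mu * N%:R) * k%:R + 1 = 1 - k%:R / (mu * N%:R) by ring.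
        case: ifP => hk.
          have : 0 <= k%:R / (mu * N%:R) by apply: divr_ge0 => //; lra.
          lra.
        move/negbT: hk; rewrite -leNgt => hk.
        have : 1 <= k%:R / (mu * N%:R) by rewrite ler_pdivlMr // mul1r.
        lra.
      * have hV := hNV w N (ltac:(apply/andP; split => //; lra)) hN.
        apply: le_trans (EE_anti (pw w) N 1 (hpw w) (expr1n _ _) hV) _.
        apply: EE_le (hpw w) _ => k; rewrite mul1r /Yf.
        case: ifP => h1; case: ifP => h2 //.
        move/negbT: h2; rewrite -leNgt => h2.
        have : N%:R * pw w <= mu * N%:R by rewrite mulrC; apply: ler_wpM2r => //; lra.
        lra.
    rewrite /fidelity.
    have h1 : \sum_(w0 < W | alphaA w0 < mu) P w0 * lamR Psig beta mu N w0 <= \sum_(w0 < W | alphaA w0 < mu) P w0.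
      apply: ler_sum => w0 _; rewrite -[X in _ <= X]mulr1; apply: ler_wpM2l; first exact: ltW.
      have := hsum1 N w0; have := hnnA N w0; lra.
    have h2 : \sum_(w0 < W | mu < alphaA w0) P w0 * lamA Psig beta mu N w0 =
        \sum_(w0 < W | mu < alphaA w0) P w0 - \sum_(w0 < W | mu < alphaA w0) P w0 * lamR Psig beta mu N w0.
      rewrite -sumrB; apply: eq_bigr => w0 _.
      have := hsum1 N w0 => h.
      have -> : lamA Psig beta mu N w0 = 1 - lamR Psig beta mu N w0 by lra.
      ring.
    have h3 : P w * lamR Psig beta mu N w <= \sum_(w0 < W | mu < alphaA w0) P w0 * lamR Psig beta mu N w0.
      rewrite (bigD1 w) //= lerDl; apply: sumr_ge0 => w0 _; apply: mulr_ge0; [exact: ltW | exact: hnnR].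
    have h4 : P w * (2 / 25) <= P w * lamR Psig beta mu N w by apply: ler_wpM2l => //; exact: ltW.
    rewrite h2; lra.
  +
    have hp : mu <= pw w by rewrite hfR in hfw; lra.
    exists (Num.truncn (1 / (pw w * (1 - pw w)))).+1, (P w * (2 / 25)).
    split => //; split; first by apply: mulr_gt0 => //.
    move=> N hN.
    have N1 : (1 <= N)%N by apply: leq_ltn_trans hN.
    have N1' : (1 : R) <= N%:R by rewrite ler1n.
    have hlam : 2 / 25 <= lamA Psig beta mu N w.
      rewrite hlA.
      have [p1|p1] : pw w = 1 \/ pw w < 1.
        by case/andP: (hpw w) => _; rewrite le_eqVlt => /orP[/eqP ->|]; [left|right].
      * have D0 : 0 < (1 - mu) * N%:R by apply: mulr_gt0; lra.
        apply: (@le_trans _ _ (EE (pw w) N (fun k => (1 / ((1 - mu) * N%:R)) * k%:R + (1 - N%:R / ((1 - mu) * N%:R))))).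
          rewrite EE_k p1; have -> : 1 / ((1 - mu) * N%:R) * (N%:R * 1) + (1 - N%:R / ((1 - mu) * N%:R)) = 1 by ring.
          lra.
        apply: EE_le' (hpw w) _ => k hkN.
        have hkN' : (k%:R : R) <= N%:R by rewrite ler_nat.
        have -> : 1 / ((1 - mu) * N%:R) * k%:R + (1 - N%:R / ((1 - mu) * N%:R)) = 1 - (N%:R - k%:R) / ((1 - mu) * N%:R).
          by ring.
        case: ifP => hk.
          have : 0 <= (N%:R - k%:R) / ((1 - mu) * N%:R) by apply: divr_ge0; lra.
          lra.
        move/negbT: hk; rewrite -ltNge => hk.
        have : 1 <= (N%:R - k%:R) / ((1 - mu) * N%:R) by rewrite ler_pdivlMr // mul1r; lra.
        lra.
      * have hV := hNV w N (ltac:(apply/andP; split => //; lra)) hN.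
        have hsg : (-1 : R) ^+ 2 = 1 by rewrite sqrrN expr1n.
        apply: le_trans (EE_anti (pw w) N (-1) (hpw w) hsg hV) _.
        apply: EE_le (hpw w) _ => k; rewrite mulN1r /Yf.
        case: ifP => h1; case: ifP => h2 //.
        move/negbT: h2; rewrite -ltNge => h2.
        have : mu * N%:R <= N%:R * pw w by rewrite mulrC; apply: ler_wpM2l => //; lra.
        lra.
    rewrite /fidelity.
    have h1 : \sum_(w0 < W | mu < alphaA w0) P w0 * lamA Psig beta mu N w0 <= \sum_(w0 < W | mu < alphaA w0) P w0.
      apply: ler_sum => w0 _; rewrite -[X in _ <= X]mulr1; apply: ler_wpM2l; first exact: ltW.
      have := hsum1 N w0; have := hnnR N w0; lra.
    have h2 : \sum_(w0 < W | alphaA w0 < mu) P w0 * lamR Psig beta mu N w0 =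
        \sum_(w0 < W | alphaA w0 < mu) P w0 - \sum_(w0 < W | alphaA w0 < mu) P w0 * lamA Psig beta mu N w0.
      rewrite -sumrB; apply: eq_bigr => w0 _.
      have := hsum1 N w0 => h.
      have -> : lamR Psig beta mu N w0 = 1 - lamA Psig beta mu N w0 by lra.
      ring.
    have h3 : P w * lamA Psig beta mu N w <= \sum_(w0 < W | alphaA w0 < mu) P w0 * lamA Psig beta mu N w0.
      rewrite (bigD1 w) //= lerDl; apply: sumr_ge0 => w0 _; apply: mulr_ge0; [exact: ltW | exact: hnnA].
    have h4 : P w * (2 / 25) <= P w * lamA Psig beta mu N w by apply: ler_wpM2l => //; exact: ltW.
    rewrite h2; lra.
Qed.
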